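(* Let $X\subset\mathbb{R}^n$, $U\subset\mathbb{R}^m$ be compact, $f:X\times U\to\mathbb{R}^n$ Lipschitz continuous, and consider $\dot{\mathbf{x}}(t)=f(\mathbf{x}(t),\mathbf{u}(t))$. Let $\Phi=\bigwedge_{i=1}^N\phi_i$ be an STL specification of the fragment described in the context over $[0,T]$ with $\Phi_a(t)\neq\emptyset$ for all $t\in[0,T]$, let $W=X\times[0,T]$, and let $\mathcal{C}^\Phi(t)\subset\mathcal{S}^\Phi(t)$ be a time-varying set. Let $\mathcal{B}:W\to\mathbb{R}$ be continuously differentiable, $g:W\to U$ continuous, $\alpha$ an extended class $\mathcal{K}$ function, $\lambda>0$, and define $q_1(x,t)=-\mathcal{B}(x,t)\mathbb{1}_{(x,t)\in\mathcal{C}^\Phi(t)}$, $q_2(x,t)=(\mathcal{B}(x,t)+\lambda)\mathbb{1}_{(x,t)\in W\setminus\mathcal{C}^\Phi(t)}$, $q_3(x,t)=-\frac{\partial\mathcal{B}}{\partial x}(x,t)f(x,g(x,t))-\frac{\partial\mathcal{B}}{\partial t}(x,t)-\alpha(\mathcal{B}(x,t))$. If there is $\eta\leq0$ such that $\max_{k\in\{1,2,3\}}q_k(x,t)\leq\eta$ for all $(x,t)\in W$, then the trajectory $\mathbf{x}_{x_0,\mathbf{u}}$ starting from $x_0$ with $(x_0,0)\in\mathcal{C}^\Phi(0)$ under $\mathbf{u}(t)=g(\mathbf{x}(t),t)$ satisfies $\mathbf{x}_{x_0,\mathbf{u}}\models\Phi$.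
   Context: STL fragment: a predicate $\mu$ is given by $h:X\to\mathbb{R}$, true at $x$ iff $h(x)\geq0$. Non-temporal formulas $\varphi ::= \mathsf{true}\mid\mu\mid\lnot\varphi\mid\varphi_1\wedge\varphi_2\mid\varphi_1\vee\varphi_2$, with pointwise robustness $\rho^\mu(x)=h(x)$, $\rho^{\lnot\varphi}=-\rho^\varphi$, $\rho^{\wedge}=\min$, $\rho^{\vee}=\max$. Each $\phi_i$ is $\square_{[a_i,b_i]}\varphi_i$ or $\lozenge_{[a_i,b_i]}\varphi_i$, $[a_i,b_i]\subseteq[0,T]$. For a signal $\mathbf{x}$: $\rho^{\square_{[a,b]}\varphi}(\mathbf{x})=\min_{t'\in[a,b]}\rho^\varphi(\mathbf{x}(t'))$, $\rho^{\lozenge_{[a,b]}\varphi}(\mathbf{x})=\max_{t'\in[a,b]}\rho^\varphi(\mathbf{x}(t'))$, $\rho^\Phi=\min_i\rho^{\phi_i}$, and $\mathbf{x}\models\Phi$ iff $\rho^\Phi(\mathbf{x})\geq0$. Intervals: $I_i=[a_i,b_i]$ for always formulas and $I_i=[t_i^*,t_i^*+\delta]$ with fixed $a_i\leq t_i^*<t_i^*+\delta\leq b_i$, $\delta>0$, for eventually formulas; $\Phi_a(t)=\{\varphi_i\mid t\in I_i\}$; $\mathcal{S}^\Phi(t)=\{(x,t)\in W\mid\min_{\varphi_i\in\Phi_a(t)}\rho^{\varphi_i}(x)\geq0\}$. $\mathbb{1}$ denotes the indicator function. An extended class $\mathcal{K}$ function is continuous, strictly increasing, with $\alpha(0)=0$.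 *)

(* Defs.v *)
From HB Require Import structures.
From mathcomp Require Import all_boot all_order all_algebra.
From mathcomp Require Import all_classical all_reals all_analysis.
Set Implicit Arguments. Unset Strict Implicit. Unset Printing Implicit Defensive.
Import Order.TTheory GRing.Theory Num.Theory.
Import numFieldNormedType.Exports.
Local Open Scope classical_set_scope.
Local Open Scope ring_scope.

Inductive stl_formula (R : realType) (n : nat) : Type :=
| STrue
| SPred of ('rV[R]_n -> R)             (* predicate mu given by h, true iff h x >= 0 *)
| SNot of stl_formula R n
| SAnd of stl_formula R n & stl_formula R n
| SOr  of stl_formula R n & stl_formula R n.
Arguments STrue {R n}.

Fixpoint rho (R : realType) (n : nat) (phi : stl_formula R n) (x : 'rV[R]_n)
  : \bar R :=
  match phi with
  | STrue => +oo%E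
  | SPred h => (h x)%:E
  | SNot p => (- rho p x)%E
  | SAnd p q => Order.min (rho p x) (rho q x)
  | SOr p q => Order.max (rho p x) (rho q x)
  end.

(* Robustness of phi_i = always_[a_i,b_i] phi_i  (if always i)
                       or eventually_[a_i,b_i] phi_i (otherwise), for a signal x.
   min/max over [a,b] are taken as inf/sup (they coincide when attained). *)
Definition rho_temporal (R : realType) (n N : nat) (always : 'I_N -> bool)
  (a b : 'I_N -> R) (phi : 'I_N -> stl_formula R n) (i : 'I_N)
  (x : R -> 'rV[R]_n) : \bar R :=
  let S := [set rho (phi i) (x t) | t in [set t | t \in `[a i, b i]%R]] in
  if always i then ereal_inf S else ereal_sup S.

Definition rho_spec (R : realType) (n N : nat) (always : 'I_N -> bool)
  (a b : 'I_N -> R) (phi : 'I_N -> stl_formula R n) (x : R -> 'rV[R]_n)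
  : \bar R :=
  \big[Order.min/+oo%E]_(i < N) rho_temporal always a b phi i x.

Definition stl_sat (R : realType) (n N : nat) (always : 'I_N -> bool)
  (a b : 'I_N -> R) (phi : 'I_N -> stl_formula R n) (x : R -> 'rV[R]_n) : Prop :=
  (0 <= rho_spec always a b phi x)%E.

Definition act_itv (R : realType) (N : nat) (always : 'I_N -> bool)
  (a b tstar : 'I_N -> R) (delta : R) (i : 'I_N) : interval R :=
  if always i then `[a i, b i] else `[tstar i, tstar i + delta].

Definition Wset (R : realType) (n : nat) (X : set 'rV[R]_n) (T : R)
  : set ('rV[R]_n * R) :=
  X `*` [set t | t \in `[0, T]].

Definition Sset (R : realType) (n N : nat) (X : set 'rV[R]_n) (T : R)
  (always : 'I_N -> bool) (a b tstar : 'I_N -> R) (delta : R)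
  (phi : 'I_N -> stl_formula R n) : set ('rV[R]_n * R) :=
  [set p | Wset X T p /\
     (0 <= \big[Order.min/+oo%E]_(i < N | p.2 \in act_itv always a b tstar delta i)
             rho (phi i) p.1)%E].

(* Main.v *)
Require Import Defs.
From HB Require Import structures.
From mathcomp Require Import all_boot all_order all_algebra.
From mathcomp Require Import all_classical all_reals all_analysis.
Import Order.TTheory GRing.Theory Num.Theory.
Import numFieldNormedType.Exports.
Local Open Scope classical_set_scope.
Local Open Scope ring_scope.

Theorem lemma1 (R : realType) (n m : nat)
  (X : set 'rV[R]_n) (U : set 'rV[R]_m)
  (f : 'rV[R]_n * 'rV[R]_m -> 'rV[R]_n)
  (T : R) (N : nat) (always : 'I_N -> bool) (a b tstar : 'I_N -> R) (delta : R)
  (phi : 'I_N -> stl_formula R n)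
  (C : set ('rV[R]_n * R))
  (B : 'rV[R]_n * R -> R) (g : 'rV[R]_n * R -> 'rV[R]_m)
  (alpha : R -> R) (lambda eta : R)
  (x0 : 'rV[R]_n) (x : R -> 'rV[R]_n) :
  compact X -> compact U ->
  (exists L : R, forall p q, (X `*` U) p -> (X `*` U) q ->
      `|f p - f q| <= L * `|p - q|) ->
  (forall i, 0 <= a i /\ a i <= b i /\ b i <= T) ->
  0 < delta ->
  (forall i, ~~ always i -> a i <= tstar i /\ tstar i + delta <= b i) ->
  (forall t, 0 <= t <= T ->
      exists i, t \in act_itv always a b tstar delta i) ->
  C `<=` Sset X T always a b tstar delta phi ->
  (forall p, Wset X T p -> differentiable B p) ->
  (forall v, {within Wset X T, continuous (fun p => 'd B p v)}) ->
  {within Wset X T, continuous g} ->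
  (forall p, Wset X T p -> U (g p)) ->
  continuous alpha -> {homo alpha : s t / s < t} -> alpha 0 = 0 ->
  0 < lambda ->
  eta <= 0 ->
  (forall p, Wset X T p ->
     let q1 := - B p * \1_C p in
     let q2 := (B p + lambda) * \1_(Wset X T `\` C) p in
     let q3 := - 'd B p (f (p.1, g p), 0) - 'd B p (0, 1) - alpha (B p) in
     Num.max q1 (Num.max q2 q3) <= eta) ->
  C (x0, 0) ->
  x 0 = x0 ->
  {within [set t | t \in `[0, T]], continuous x} ->
  (forall t, 0 < t < T -> is_derive t 1 x (f (x t, g (x t, t)))) ->
  (forall t, 0 <= t <= T -> X (x t)) ->
  stl_sat always a b phi x.
Proof.
Proof.
move=> _ _ _ Hab Hd Hev _ HCS HBd _ _ _ _ _ _ Hl Heta HB HC0 Hx0 Hxc _ HX.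
have CW : forall p, C p -> Wset X T p by move=> p /HCS [].
have HW : forall p, Wset X T p -> (C p -> 0 <= B p) /\ (~ C p -> B p <= - lambda).
  move=> p Wp; have := HB p Wp; rewrite /= !ge_max => /and3P[h1 h2 _].
  split => Cp.
    move: h1; rewrite indicE mem_set // mulr1 => h1.
    by rewrite -oppr_le0; apply: le_trans h1 Heta.
  move: h2; rewrite indicE mem_set // mulr1 => h2.
  by rewrite -subr_le0 opprK; apply: le_trans h2 Heta.
set h := fun t => B (x t, t).
have hc : {within [set t | t \in `[0, T]], continuous h}.
  apply/subspace_continuousP => t Ht.
  have Wt : Wset X T (x t, t).
    move: (Ht); rewrite /= in_itv /= => Ht'.
    by split => //=; apply: HX.
  have Bc := differentiable_continuous (HBd _ Wt).
  have hk : (fun s => (x s, s)) @ within [set t | t \in `[0, T]] (nbhs t) --> (x t, t).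
    have hx : x @ within [set t | t \in `[0, T]] (nbhs t) --> x t.
      by move/subspace_continuousP: Hxc; apply.
    exact: (cvg_pair hx (@cvg_within _ (nbhs t) _ [set t | t \in `[0, T]])).
  exact: (@cvg_comp _ _ _ _ _ _ _ _ hk Bc).
have key : forall t, 0 <= t <= T -> C (x t, t).
  move=> t /andP[t0 tT]; apply: contrapT => nC.
  have Wt : Wset X T (x t, t) by split => //=; [apply: HX; rewrite t0 | rewrite in_itv /= t0].
  have ht := (HW _ Wt).2 nC.
  have h0 : 0 <= h 0 by rewrite /h Hx0; apply: (HW _ (CW _ HC0)).1.
  have [c cin hcv] : exists2 c, c \in `[0, t] & h c = - (lambda / 2).
    apply: IVT => //.
      apply: continuous_subspaceW hc => s /=; rewrite !in_itv /= => /andP[-> st].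
      exact: le_trans st tT.
    have ht' : h t <= - lambda by [].
    rewrite ge_min le_max; apply/andP; split.
      by apply/orP; right; apply: le_trans ht _; rewrite lerN2 ler_pdivrMr // ler_pMr // ler1n.
    by apply/orP; left; apply: le_trans h0; rewrite oppr_le0 divr_ge0 // ltW.
  move: cin; rewrite in_itv /= => /andP[c0 ct].
  have Wc : Wset X T (x c, c).
    by split => //=; [apply: HX; rewrite c0 (le_trans ct tT) | rewrite in_itv /= c0 (le_trans ct tT)].
  have [H1 H2] := HW _ Wc.
  have [Cc|nCc] := pselect (C (x c, c)).
    have := H1 Cc; rewrite -/(h c) hcv oppr_ge0 => H.
    have : 0 < lambda / 2 by rewrite divr_gt0.
    by rewrite ltNge H.
  have := H2 nCc; rewrite -/(h c) hcv lerN2 ler_pdivlMr // => H.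
  have : lambda * 1 < lambda * 2 by rewrite ltr_pM2l // ltr1n.
  by rewrite mulr1 => /(le_lt_trans H); rewrite ltxx.
have rho_ok : forall t i, 0 <= t <= T -> t \in act_itv always a b tstar delta i ->
    (0 <= rho (phi i) (x t))%E.
  move=> t i tin ti; have := HCS _ (key t tin) => -[_ /=].
  by rewrite (bigD1 i) //= le_min => /andP[].
rewrite /stl_sat /rho_spec; apply: (big_ind (fun e => 0 <= e)%E) => //.
  by move=> e1 e2 h1 h2; rewrite le_min h1 h2.
move=> i _; rewrite /rho_temporal.
have [a0 [ab bT]] := Hab i.
case: ifP => Hai.
  apply: le_ereal_inf_tmp => _ [t /= tin <-].
  move: tin; rewrite in_itv /= => /andP[ha tb].
  apply: rho_ok; first by rewrite (le_trans a0 ha) (le_trans tb bT).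
  by rewrite /act_itv Hai in_itv /= ha tb.
have [ts td] := Hev i (negbT Hai).
have tsin : tstar i \in `[a i, b i].
  rewrite in_itv /= ts /=; apply: le_trans td; rewrite lerDl ltW //.
apply: (le_trans _ (ereal_sup_ubound _)); last by exists (tstar i).
apply: rho_ok.
  move: tsin; rewrite in_itv /= => /andP[h1 h2]; rewrite (le_trans a0 h1) (le_trans h2 bT) //.
by rewrite /act_itv Hai in_itv /= lexx lerDl ltW.
Qed.
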